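(* Under the standing assumptions below, the group $(V,+)$ is characteristically simple, i.e. $V=S_1\oplus\dots\oplus S_n$ is a direct sum of pairwise isomorphic simple groups. In particular, if $V$ is abelian then $V\cong C_p^n$ is an elementary abelian $p$-group for some prime $p$, while if $V$ is non-abelian then $Z(V)=0$.
   Context: Skew left brace $(B,+,\circ)$: groups $(B,+)$, $(B,\circ)$ with $a\circ(b+c)=a\circ b-a+a\circ c$; $\lambda_a(b)=-a+a\circ b$, $\sigma_a(b)=-a+b+a$, $a*b=-a+a\circ b-b$. Ideal: normal subgroup $I$ of $(B,+)$, $\lambda_a(I)\subseteq I$ for all $a$, normal in $(B,\circ)$. $I*J$ = additive subgroup generated by $\{i*j\}$; $B^{(2)}=B*B$, $B^{(3)}=B^{(2)}*B$. Standing assumptions: $B$ is a finite skew left brace and $X\subseteq B$ with $|X|\ge3$ and $\lambda_a(X)=X$, $\sigma_a(X)=X$ for all $a\in B$; $B$ is additively generated by $X$; the ideal $V$ generated by $\{x-y:x,y\in X\}$ is the smallest non-zero ideal of $B$ (contained in every non-zero ideal); the quotient $B/V$ is a trivial skew left brace (its two operations coincide) with cyclic additive group; the group $\{\sigma_a\lambda_b|_X:a,b\in V\}$ acts transitively on $X$; and $B^{(3)}=0$. *)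

(* Defs.v *)
(* A finite skew left brace (B,+,o) is encoded with the
   additive group (B,+) as a finGroupType gT (written multiplicatively in
   MathComp: a + b is a * b, -a is a^-1, 0 is 1) and the circle group
   (B,o) given by explicit operations circ / cinv / cone with group axioms. *)
From HB Require Import structures.
From mathcomp Require Import all_boot all_fingroup all_solvable.
Set Implicit Arguments. Unset Strict Implicit. Unset Printing Implicit Defensive.
Import GroupScope.
Local Open Scope group_scope.

Section SkewBrace.
Variable gT : finGroupType.
Variables (circ : gT -> gT -> gT) (cinv : gT -> gT) (cone : gT).

Definition is_skew_brace : Prop :=
  [/\ forall a b c, circ a (circ b c) = circ (circ a b) c,
      forall a, circ cone a = a /\ circ a cone = a,
      forall a, circ (cinv a) a = cone /\ circ a (cinv a) = cone &
      forall a b c, circ a (b * c) = circ a b * a^-1 * circ a c].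

Definition lam (a b : gT) : gT := a^-1 * circ a b.
Definition sig (a b : gT) : gT := a^-1 * b * a.
Definition bstar (a b : gT) : gT := a^-1 * circ a b * b^-1.

Definition is_ideal (I : {set gT}) : bool :=
  [&& group_set I, I <| [set: gT],
      [forall a, forall i in I, lam a i \in I],
      cone \in I, [forall i in I, forall j in I, circ i j \in I],
      [forall i in I, cinv i \in I] &
      [forall a, forall i in I, circ (circ a i) (cinv a) \in I]].

Definition ideal_gen (S : {set gT}) : {set gT} :=
  \bigcap_(I : {set gT} | is_ideal I && (S \subset I)) I.

Definition brace_prod (I J : {set gT}) : {set gT} :=
  <<[set bstar i j | i in I, j in J]>>.

Definition diffset (X : {set gT}) : {set gT} := [set x * y^-1 | x in X, y in X].

End SkewBrace.

(* Main.v *)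
Require Import Defs.
From HB Require Import structures.
From mathcomp Require Import all_boot all_fingroup all_solvable.
Set Implicit Arguments. Unset Strict Implicit. Unset Printing Implicit Defensive.
Import GroupScope.
Local Open Scope group_scope.

Lemma br_circ1 (gT : finGroupType) (circ : gT -> gT -> gT) cinv cone
  (hB : is_skew_brace circ cinv cone) a : circ a 1 = a.
Proof.
case: hB => _ _ _ hD.
have := hD a 1 1; rewrite mulg1 => H.
have H2 : circ a 1 * 1 = circ a 1 * (a^-1 * circ a 1) by rewrite mulg1 mulgA -H.
move/mulgI: H2 => H3.
by apply: (mulgI a^-1); rewrite -H3 mulVg.
Qed.

Lemma br_cone (gT : finGroupType) (circ : gT -> gT -> gT) cinv cone
  (hB : is_skew_brace circ cinv cone) : cone = 1.
Proof.
have := br_circ1 hB cone; case: (hB) => _ hid _ _; by case: (hid 1) => -> _.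
Qed.

Lemma br_lamM (gT : finGroupType) (circ : gT -> gT -> gT) cinv cone
  (hB : is_skew_brace circ cinv cone) a x y :
  lam circ a (x * y) = lam circ a x * lam circ a y.
Proof. case: hB => _ _ _ hD; by rewrite /lam hD !mulgA. Qed.

Lemma br_lam1 (gT : finGroupType) (circ : gT -> gT -> gT) cinv cone
  (hB : is_skew_brace circ cinv cone) a : lam circ a 1 = 1.
Proof. by rewrite /lam (br_circ1 hB) mulVg. Qed.

Lemma br_lamV (gT : finGroupType) (circ : gT -> gT -> gT) cinv cone
  (hB : is_skew_brace circ cinv cone) a x :
  lam circ a x^-1 = (lam circ a x)^-1.
Proof.
apply: (mulgI (lam circ a x)); by rewrite -(br_lamM hB) !mulgV (br_lam1 hB).
Qed.

Lemma br_lam_inj (gT : finGroupType) (circ : gT -> gT -> gT) cinv cone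
  (hB : is_skew_brace circ cinv cone) a : injective (lam circ a).
Proof.
move=> x y; rewrite /lam => /mulgI H.
case: hB => hA hid hinv _.
have: circ (cinv a) (circ a x) = circ (cinv a) (circ a y) by rewrite H.
rewrite !hA; case: (hinv a) => -> _; by case: (hid x) => -> _; case: (hid y) => -> _.
Qed.

Lemma br_lamC (gT : finGroupType) (circ : gT -> gT -> gT) cinv cone
  (hB : is_skew_brace circ cinv cone) a b c :
  lam circ (circ a b) c = lam circ a (lam circ b c).
Proof.
rewrite [lam circ b c]/lam (br_lamM hB) (br_lamV hB) /lam; case: hB => hA _ _ _.
rewrite hA invMg invgK !mulgA mulgK. by [].
Qed.

Lemma br_lam_cinv (gT : finGroupType) (circ : gT -> gT -> gT) cinv cone
  (hB : is_skew_brace circ cinv cone) a : lam circ a (cinv a) = a^-1.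
Proof.
rewrite /lam; have := br_cone hB; case: hB => _ _ hinv _ h1.
by case: (hinv a) => _ ->; rewrite h1 mulg1.
Qed.

Lemma br_lam_cinvK (gT : finGroupType) (circ : gT -> gT -> gT) cinv cone
  (hB : is_skew_brace circ cinv cone) a y : lam circ (cinv a) (lam circ a y) = y.
Proof.
rewrite -(br_lamC hB) /lam; have := br_cone hB; case: hB => _ hid hinv _ h1.
case: (hinv a) => -> _; rewrite h1 invg1 mul1g.
by rewrite -h1; case: (hid y).
Qed.

Lemma br_bstarE (gT : finGroupType) (circ : gT -> gT -> gT) a b :
  bstar circ a b = lam circ a b * b^-1.
Proof. by []. Qed.

Lemma conj_norm (gT : finGroupType) (G : {group gT}) :
  (forall x c, x \in G -> x ^ c \in G) -> forall c, c \in 'N(G).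
Proof.
move=> hc c; apply/normP/eqP; rewrite eqEcard cardJg leqnn andbT.
apply/subsetP => y; rewrite mem_conjg => /(hc _ c); by rewrite conjgKV.
Qed.

Lemma gen_closed (gT : finGroupType) (S : {set gT}) (f : gT -> gT) :
  f 1 = 1 -> {morph f : x y / x * y} -> (forall s, s \in S -> f s \in <<S>>) ->
  forall x, x \in <<S>> -> f x \in <<S>>.
Proof.
move=> f1 fM hS.
have gT' : group_set [set x | f x \in <<S>>].
  apply/group_setP; split; first by rewrite inE f1 group1.
  by move=> x y; rewrite !inE fM; apply: groupM.
have : <<S>> \subset Group gT'.
  by rewrite gen_subG; apply/subsetP => s hs; rewrite /= inE hS.
by move/subsetP => H x /H; rewrite /= inE.
Qed.

Lemma ideal_of (gT : finGroupType) (circ : gT -> gT -> gT) cinv cone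
  (hB : is_skew_brace circ cinv cone) (I : {group gT}) :
  (forall x c, x \in I -> x ^ c \in I) ->
  (forall a x, x \in I -> lam circ a x \in I) ->
  (forall x b, x \in I -> bstar circ x b \in I) ->
  is_ideal circ cinv cone I.
Proof.
move=> hc hl hs.
have circE : forall a b, circ a b = a * lam circ a b by move=> a b; rewrite /lam mulKVg.
apply/and5P; split; first exact: valP.
- by rewrite /normal subsetT /=; apply/subsetP => c _; apply: conj_norm.
- by apply/forallP => a; apply/forall_inP => i; apply: hl.
- by rewrite (br_cone hB) group1.
apply/and3P; split.
- by apply/forall_inP => i hi; apply/forall_inP => j hj; rewrite circE groupM // hl.
- apply/forall_inP => i hi.
  have hsub : [set lam circ i x | x in I] \subset I.
    by apply/subsetP => y /imsetP [x hx ->]; apply: hl.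
  have heq : [set lam circ i x | x in I] = I.
    apply/eqP; rewrite eqEcard hsub card_imset /=.
  by []. by move=> x y /(br_lam_inj hB).
  have : i^-1 \in [set lam circ i x | x in I] by rewrite heq groupV.
  case/imsetP => y hy hyE.
  have : lam circ i y = lam circ i (cinv i) by rewrite -hyE (br_lam_cinv hB).
  by move/(br_lam_inj hB) <-.
- apply/forallP => a; apply/forall_inP => i hi.
  have -> : circ (circ a i) (cinv a)
     = (lam circ a i * lam circ a (bstar circ i (cinv a))) ^ (a^-1).
    rewrite circE (br_lamC hB) circE.
    have -> : lam circ i (cinv a) = bstar circ i (cinv a) * cinv a
      by rewrite br_bstarE mulgKV.
    rewrite (br_lamM hB) (br_lam_cinv hB).
    by rewrite /conjg invgK !mulgA.
  by rewrite hc // groupM // hl // hs.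
Qed.

Lemma ideal_parts (gT : finGroupType) (circ : gT -> gT -> gT) cinv cone (I : {set gT}) :
  is_ideal circ cinv cone I ->
  [/\ group_set I, forall x c, x \in I -> x ^ c \in I &
      forall a x, x \in I -> lam circ a x \in I].
Proof.
case/and5P => hg hn hl _ _; split => //.
- move=> x c hx; have Ig := Group hg.
  case/andP: hn => _ /subsetP /(_ c (in_setT c)) hc.
  by rewrite (memJ_norm x hc).
- by move=> a x hx; move/forallP: hl => /(_ a) /forall_inP; apply.
Qed.

Lemma ideal_gen_parts (gT : finGroupType) (circ : gT -> gT -> gT) cinv cone S :
  let V := ideal_gen circ cinv cone S in
  [/\ group_set V, forall x c, x \in V -> x ^ c \in V &
      forall a x, x \in V -> lam circ a x \in V].
Proof.
move=> V; split.
- apply/group_setP; split.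
    by apply/bigcapP => I /andP [/ideal_parts [hg _ _] _]; rewrite (group1 (Group hg)).
  move=> x y /bigcapP hx /bigcapP hy; apply/bigcapP => I hI.
  case/andP: (hI) => /ideal_parts [hg _ _] _.
  exact: (groupM (G := Group hg) (hx I hI) (hy I hI)).
- move=> x c /bigcapP hx; apply/bigcapP => I hI.
  case/andP: (hI) => /ideal_parts [_ hc _] _; exact: hc (hx I hI).
- move=> a x /bigcapP hx; apply/bigcapP => I hI.
  case/andP: (hI) => /ideal_parts [_ _ hl] _; exact: hl (hx I hI).
Qed.

Lemma B2_ideal (gT : finGroupType) (circ : gT -> gT -> gT) cinv cone
  (hB : is_skew_brace circ cinv cone) :
  is_ideal circ cinv cone (brace_prod circ [set: gT] [set: gT]).
Proof.
set S := [set bstar circ i j | i in [set: gT], j in [set: gT]].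
have inS : forall a b, bstar circ a b \in <<S>>
  by move=> a b; apply: mem_gen; apply: imset2_f; rewrite inE.
suff : is_ideal circ cinv cone <<S>>%G by [].
apply: (@ideal_of gT circ cinv cone hB <<S>>%G).
- move=> x c; apply: (@gen_closed gT S (fun y => y ^ c)).
  + exact: conj1g.
  + by move=> u v; rewrite conjMg.
  move=> s /imset2P [a d _ _ ->].
  have -> : bstar circ a d ^ c = (bstar circ a c^-1)^-1 * bstar circ a (c^-1 * d).
    rewrite !br_bstarE (br_lamM hB) (br_lamV hB) /conjg !invMg !invgK !mulgA.
    by rewrite !mulgK.
  by rewrite groupM ?groupV ?inS.
- move=> a x; apply: (@gen_closed gT S (lam circ a)).
  + exact: (br_lam1 hB).
  + exact: (br_lamM hB).
  move=> s /imset2P [b d _ _ ->].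
  have -> : lam circ a (bstar circ b d)
      = bstar circ (circ (circ a b) (cinv a)) (lam circ a d).
    rewrite !br_bstarE !(br_lamC hB) (br_lam_cinvK hB).
    by rewrite (br_lamM hB) (br_lamV hB).
  exact: inS.
- by move=> x b _; apply: inS.
Qed.

Lemma star_triv (gT : finGroupType) (circ : gT -> gT -> gT) cinv cone
  (hB : is_skew_brace circ cinv cone) (V : {set gT})
  (hVmin : forall I : {set gT}, is_ideal circ cinv cone I -> I != 1 -> V \subset I)
  (h3 : brace_prod circ (brace_prod circ [set: gT] [set: gT]) [set: gT] = 1) :
  forall v b, v \in V -> bstar circ v b = 1.
Proof.
move=> v b hv.
set J := brace_prod circ [set: gT] [set: gT].
case: (eqVneq J 1) => hJ.
  have : bstar circ v b \in J by apply: mem_gen; apply: imset2_f; rewrite inE.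
  by rewrite hJ inE => /eqP.
have hvJ : v \in J by apply: (subsetP (hVmin _ (B2_ideal hB) hJ)).
have : bstar circ v b \in brace_prod circ J [set: gT].
  by apply: mem_gen; apply: imset2_f; rewrite ?inE.
by rewrite h3 inE => /eqP.
Qed.

Unset Implicit Arguments.
Theorem lemma5p3 (gT : finGroupType) (circ : gT -> gT -> gT) (cinv : gT -> gT)
    (cone : gT) (hB : is_skew_brace circ cinv cone)
    (X : {set gT}) (hX3 : 3 <= #|X|)
    (hXlam : forall a, [set lam circ a x | x in X] = X)
    (hXsig : forall a, [set sig a x | x in X] = X)
    (hXgen : <<X>> = [set: gT])
    (V : {set gT}) (hVdef : V = ideal_gen circ cinv cone (diffset X))
    (hVnz : V != 1)
    (hVmin : forall I : {set gT}, is_ideal circ cinv cone I -> I != 1 -> V \subset I)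
    (hVtriv : forall a b, coset V (circ a b) = coset V (a * b))
    (hVcyc : cyclic ([set: gT] / V))
    (htrans : forall x y, x \in X -> y \in X ->
       exists2 a, a \in V & exists2 b, b \in V & sig a (lam circ b x) = y)
    (h3 : brace_prod circ (brace_prod circ [set: gT] [set: gT]) [set: gT] = 1) :
  charsimple V /\
  (abelian V -> exists2 p, prime p & p.-abelem V) /\
  (~~ abelian V -> 'Z(V) = 1).
Proof.
have [hVg hVc hVl] := ideal_gen_parts circ cinv cone (diffset X).
rewrite -hVdef in hVg hVc hVl.
have hst := star_triv hB hVmin h3.
set VG := Group hVg.
have -> : V = gval VG by [].
have hcs : charsimple VG.
  apply/charsimpleP; split => // H hH hchar.
  have hHV : H \subset VG := char_sub hchar.
  have hHi : is_ideal circ cinv cone H.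
    apply: (ideal_of hB).
    - move=> x c hx.
      have hN : [set: gT] \subset 'N(H).
        apply: (char_norm_trans hchar); apply/subsetP => d _.
        exact: conj_norm.
      by rewrite (memJ_norm x (subsetP hN c (in_setT c))).
    - move=> a x hx.
      case/charP: hchar => _ /(_ (@Morphism gT gT VG (lam circ a) (in2W (br_lamM hB a)))) hf.
      have hinj : 'injm (@Morphism gT gT VG (lam circ a) (in2W (br_lamM hB a))).
        by apply/injmP => u w _ _ /(br_lam_inj hB).
      have him : (@Morphism gT gT VG (lam circ a) (in2W (br_lamM hB a))) @* VG = VG.
        rewrite morphimEdom; apply/eqP; rewrite eqEcard card_in_imset.
          rewrite leqnn andbT; apply/subsetP => y /imsetP [z hz ->]; exact: hVl.
        by move=> u w _ _ /(br_lam_inj hB).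
      have := mem_morphim (@Morphism gT gT VG (lam circ a) (in2W (br_lamM hB a)))
                (subsetP hHV x hx) hx.
      by rewrite (hf hinj him).
    - by move=> x b hx; rewrite hst ?group1 // (subsetP hHV).
  apply/eqP; rewrite eqEsubset hHV /=; exact: hVmin _ hHi hH.
split => //; split.
  move=> hab; have := charsimple_solvable hcs (abelian_sol hab).
  move=> habm; exists (pdiv #|VG|) => //.
  by apply: pdiv_prime; rewrite cardG_gt1.
move=> hnab; apply/eqP; apply/negP => /negP hZ.
case/charsimpleP: hcs => _ /(_ ('Z(VG))%G hZ (center_char VG)) hZV.
by have := center_abelian VG; rewrite hZV (negbTE hnab).
Qed.
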